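(* If $G$ is a graph and $m$ is a minimal $k$-precentral function for $G$, then $m^*(y)-m^*(z) \leq 1$ for all $y,z \in V(G)$.
   Context: Let $k\ge 2$ be an integer and $G$ a graph with $|E(G)|\equiv 0 \pmod{k}$. A $k$-precentral function for $G$ is a function $p: V(G)\to\mathbb{Z}_{\geq 0}$ with $\sum_{x\in V(G)} p(x)=\frac{1}{k}|E(G)|$. For such $p$, define $p^*(x)=p(x)-\frac{1}{2k}\deg_G(x)$ for each $x\in V(G)$. The function $p$ is proportional if $p(x)\in\{\lfloor \frac{1}{2k}\deg_G(x)\rfloor, \lceil \frac{1}{2k}\deg_G(x)\rceil\}$ for every $x\in V(G)$. A proportional $k$-precentral function $p$ is minimal if it minimises $\sum_{x\in V(G)}|p^*(x)|$ among all proportional $k$-precentral functions for $G$. *)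

(* Defs.v *)
From HB Require Import structures.
From mathcomp Require Import all_boot all_order all_algebra.
Set Implicit Arguments. Unset Strict Implicit. Unset Printing Implicit Defensive.
Import Order.TTheory GRing.Theory Num.Theory.

(* A finite simple graph on vertex set T: adjacency relation e, assumed
   symmetric and irreflexive (hypotheses of the theorem). *)
Section Graph.
Variables (T : finType) (e : rel T).

Definition deg (x : T) : nat := #|[set y | e x y]|.

Definition edges : {set {set T}} :=
  [set E : {set T} | [exists x, exists y, e x y && (E == [set x; y])]].

Definition nedges : nat := #|edges|.

(* k-precentral: sum of p equals |E(G)|/k (k divides |E(G)| by hypothesis) *)
Definition precentral (k : nat) (p : T -> nat) : Prop :=
  \sum_(x : T) p x = nedges %/ k.

Definition pstar (k : nat) (p : T -> nat) (x : T) : rat :=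
  ((p x)%:R - (deg x)%:R / (2 * k)%:R)%R.

Definition floor_deg (k : nat) (x : T) : nat := deg x %/ (2 * k).
Definition ceil_deg (k : nat) (x : T) : nat := (deg x + (2 * k).-1) %/ (2 * k).

Definition proportional (k : nat) (p : T -> nat) : Prop :=
  forall x, p x = floor_deg k x \/ p x = ceil_deg k x.

Definition total_dev (k : nat) (p : T -> nat) : rat :=
  (\sum_(x : T) `|pstar k p x|)%R.

Definition minimal_precentral (k : nat) (m : T -> nat) : Prop :=
  [/\ precentral k m, proportional k m &
      forall q : T -> nat, precentral k q -> proportional k q ->
        (total_dev k m <= total_dev k q)%R].
End Graph.

(* Main.v *)
Require Import Defs.
From mathcomp Require Import all_boot all_order all_algebra.
Import Order.TTheory GRing.Theory Num.Theory.
From mathcomp Require Import zify ring lra.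

Local Open Scope ring_scope.
Section Aux.
Variables (T : finType) (e : rel T) (k : nat).
Hypothesis k_gt0 : (0 < k)%N.

Let tt (x : T) : rat := ((deg e x)%:R / (2 * k)%:R)%R.

Lemma bounds x :
  [/\ ((floor_deg e k x)%:R <= tt x)%R, (tt x < (floor_deg e k x)%:R + 1)%R,
      (tt x <= (ceil_deg e k x)%:R)%R, ((ceil_deg e k x)%:R - 1 < tt x)%R &
      (ceil_deg e k x <= (floor_deg e k x).+1)%N].
Proof.
rewrite /tt /floor_deg /ceil_deg.
set n := deg e x; set c := (2 * k)%N.
have c0 : (0 < c)%N by rewrite /c; lia.
have c0r : (0 < c%:R :> rat)%R by rewrite ltr0n.
set f := (n %/ c)%N; set g := ((n + c.-1) %/ c)%N.
have h1 : (f * c <= n)%N by apply: leq_divM.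
have := ltn_ceil n c0; rewrite mulSn -/f => h2.
have h3 : (g * c <= n + c.-1)%N by apply: leq_divM.
have := ltn_ceil (n + c.-1) c0; rewrite mulSn -/g => h4.
have h5 : (n <= g * c)%N by lia.
have h6 : (g * c < n + c)%N by lia.
split.
- by rewrite ler_pdivlMr // -natrM ler_nat.
- by rewrite ltr_pdivrMr // -[1%R]/(1%N%:R) -natrD -natrM ltr_nat; lia.
- by rewrite ler_pdivrMr // -natrM ler_nat.
- rewrite ltr_pdivlMr // mulrBl mul1r ltrBlDr -!natrM -natrD ltr_nat. lia.
- nia.
Qed.

Lemma pstar_range p x : proportional e k p ->
  (-1 < pstar e k p x)%R /\ (pstar e k p x < 1)%R.
Proof.
move=> /(_ x) hp; rewrite /pstar.
case: (bounds x) => b1 b2 b3 b4 _.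
by case: hp => ->; fold (tt x); move: b1 b2 b3 b4; generalize (tt x) => t; split; lra.
Qed.

Lemma pstar_pos p x : proportional e k p -> (0 < pstar e k p x)%R ->
  p x = (floor_deg e k x).+1.
Proof.
move=> /(_ x) hp; rewrite /pstar; fold (tt x) => hpos.
case: (bounds x) => b1 b2 b3 b4 b5.
case: hp => hp.
  move: hpos b1; rewrite hp; generalize (tt x) => t; intros; exfalso; lra.
have : ((floor_deg e k x) < ceil_deg e k x)%N.
  rewrite -(ltr_nat rat) -hp; lra.
lia.
Qed.

Lemma pstar_neg p x : proportional e k p -> (pstar e k p x < 0)%R ->
  p x = floor_deg e k x /\ ceil_deg e k x = (floor_deg e k x).+1.
Proof.
move=> /(_ x) hp; rewrite /pstar; fold (tt x) => hneg.
case: (bounds x) => b1 b2 b3 b4 b5.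
case: hp => hp.
  split => //.
  have : ((floor_deg e k x) < ceil_deg e k x)%N.
    rewrite -(ltr_nat rat) -hp; move: hneg b3 b2; generalize (tt x) => t; lra.
  lia.
move: hneg b3; rewrite hp; generalize (tt x) => t; intros; exfalso; lra.
Qed.

End Aux.
Local Close Scope ring_scope.

Theorem lemma14 (T : finType) (e : rel T) (k : nat) (m : T -> nat) :
  symmetric e -> irreflexive e -> 2 <= k -> k %| nedges e ->
  minimal_precentral e k m ->
  forall y z : T, (pstar e k m y - pstar e k m z <= 1)%R.
Proof.
move=> _ _ k2 _ [mpre mprop mmin] y z.
have k0 : (0 < k)%N by lia.
rewrite leNgt; apply/negP => hD.
have [ry1 ry2] := @pstar_range _ e k k0 m y mprop.
have [rz1 rz2] := @pstar_range _ e k k0 m z mprop.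
have hy : (0 < pstar e k m y)%R by lra.
have hz : (pstar e k m z < 0)%R by lra.
have my := @pstar_pos _ e k k0 m y mprop hy.
have [mz cz] := @pstar_neg _ e k k0 m z mprop hz.
have yz : y != z.
  apply/eqP => eyz; move: hD; rewrite eyz subrr; lra.
pose q x := if x == y then (m y).-1 else if x == z then (m z).+1 else m x.
have qy : q y = (m y).-1 by rewrite /q eqxx.
have qz : q z = (m z).+1 by rewrite /q eq_sym (negbTE yz) eqxx.
have qo x : x != y -> x != z -> q x = m x by rewrite /q => /negbTE -> /negbTE ->.
have split2 (F : T -> rat) : (\sum_x F x = F y + F z + \sum_(x | (x != y) && (x != z)) F x)%R.
  rewrite (bigD1 y) //= (bigD1 z) /=; last by rewrite eq_sym.
  rewrite addrA; congr (_ + _)%R; apply: eq_bigl => x; by rewrite andbC.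
have sumE (F : T -> rat) G : (F y + F z = G y + G z)%R -> (forall x, x != y -> x != z -> F x = G x) ->
   (\sum_x F x = \sum_x G x)%R.
  move=> Hyz Ho; rewrite !split2 Hyz; congr (_ + _)%R.
  by apply: eq_bigr => x /andP[hx1 hx2]; apply: Ho.
have qpre : precentral e k q.
  rewrite /precentral -mpre; apply/eqP; rewrite -(eqr_nat rat) !natr_sum; apply/eqP.
  apply: sumE; last by move=> x h1 h2; rewrite qo.
  rewrite qy qz my /= -!natrD; congr (GRing.natmul _ _); lia.
have qprop : proportional e k q.
  move=> x; case: (eqVneq x y) => [->|hxy]; first by rewrite qy my; left.
  case: (eqVneq x z) => [->|hxz]; first by rewrite qz mz cz; right.
  by rewrite qo //; apply: mprop.
have := mmin q qpre qprop.
rewrite /total_dev.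
have psy : pstar e k q y = (pstar e k m y - 1)%R.
  rewrite /pstar qy my /= -[in RHS](addn1 (floor_deg e k y)) natrD; lra.
have psz : pstar e k q z = (pstar e k m z + 1)%R.
  rewrite /pstar qz -addn1 natrD; lra.
have dec : (\sum_x `|pstar e k q x| = \sum_x `|pstar e k m x| - (pstar e k m y - pstar e k m z) + (2 - (pstar e k m y - pstar e k m z)))%R.
  rewrite !split2.
  have h1 : (pstar e k m y - 1 <= 0)%R by lra.
  have h2 : (0 <= pstar e k m z + 1)%R by lra.
  rewrite psy psz (gtr0_norm hy) (ltr0_norm hz) (ler0_norm h1) (ger0_norm h2).
  rewrite (eq_bigr (fun x => `|pstar e k m x|)%R); last first.
    by move=> x /andP[g1 g2]; rewrite /pstar qo.
  lra.
rewrite dec; lra.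
Qed.
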